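(* In the algebra $\mathcal O_q$ defined in the context, the following relations hold: $[\mathcal W_0,\tilde{\mathcal G}_1]=[\mathcal W_0,[\mathcal W_0,\mathcal W_1]_q]$ and $[\tilde{\mathcal G}_1,\mathcal W_1]=[[\mathcal W_0,\mathcal W_1]_q,\mathcal W_1]$.
   Context: All algebras are associative and unital over a field $\mathbb F$; $q\in\mathbb F$ is nonzero and not a root of unity. For elements $X,Y$ of an algebra, $[X,Y]=XY-YX$ and $[X,Y]_q=qXY-q^{-1}YX$. Let $\rho=-(q^2-q^{-2})^2$. The algebra $\mathcal O_q$ is defined by generators $\mathcal W_{-k},\mathcal W_{k+1},\mathcal G_{k+1},\tilde{\mathcal G}_{k+1}$ ($k\in\mathbb N$) and the following relations for all $k,\ell\in\mathbb N$: $[\mathcal W_0,\mathcal W_{k+1}]=[\mathcal W_{-k},\mathcal W_1]=(\tilde{\mathcal G}_{k+1}-\mathcal G_{k+1})/(q+q^{-1})$; $[\mathcal W_0,\mathcal G_{k+1}]_q=[\tilde{\mathcal G}_{k+1},\mathcal W_0]_q=\rho\mathcal W_{-k-1}-\rho\mathcal W_{k+1}$; $[\mathcal G_{k+1},\mathcal W_1]_q=[\mathcal W_1,\tilde{\mathcal G}_{k+1}]_q=\rho\mathcal W_{k+2}-\rho\mathcal W_{-k}$; $[\mathcal W_{-k},\mathcal W_{-\ell}]=0$, $[\mathcal W_{k+1},\mathcal W_{\ell+1}]=0$; $[\mathcal W_{-k},\mathcal W_{\ell+1}]+[\mathcal W_{k+1},\mathcal W_{-\ell}]=0$; $[\mathcal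 W_{-k},\mathcal G_{\ell+1}]+[\mathcal G_{k+1},\mathcal W_{-\ell}]=0$; $[\mathcal W_{-k},\tilde{\mathcal G}_{\ell+1}]+[\tilde{\mathcal G}_{k+1},\mathcal W_{-\ell}]=0$; $[\mathcal W_{k+1},\mathcal G_{\ell+1}]+[\mathcal G_{k+1},\mathcal W_{\ell+1}]=0$; $[\mathcal W_{k+1},\tilde{\mathcal G}_{\ell+1}]+[\tilde{\mathcal G}_{k+1},\mathcal W_{\ell+1}]=0$; $[\mathcal G_{k+1},\mathcal G_{\ell+1}]=0$, $[\tilde{\mathcal G}_{k+1},\tilde{\mathcal G}_{\ell+1}]=0$; $[\tilde{\mathcal G}_{k+1},\mathcal G_{\ell+1}]+[\mathcal G_{k+1},\tilde{\mathcal G}_{\ell+1}]=0$. *)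

(* Defs.v *)
From HB Require Import structures.
From mathcomp Require Import all_boot all_order all_algebra.
Set Implicit Arguments. Unset Strict Implicit. Unset Printing Implicit Defensive.
Import GRing.Theory.
Local Open Scope ring_scope.

Definition comm (R : pzRingType) (X Y : R) : R := X * Y - Y * X.

Definition qcomm (F : fieldType) (A : algType F) (q : F) (X Y : A) : A :=
  q *: (X * Y) - q^-1 *: (Y * X).

Definition rho (F : fieldType) (q : F) : F := - (q ^+ 2 - q ^- 2) ^+ 2.

(* Defining relations of O_q, for a family of elements of an F-algebra A:
   Wm k = W_{-k}, Wp k = W_{k+1}, G k = G_{k+1}, Gt k = tilde G_{k+1}. *)
Definition Oq_relations (F : fieldType) (q : F) (A : algType F)
    (Wm Wp G Gt : nat -> A) : Prop :=
  (forall k, comm (Wm 0%N) (Wp k) = (q + q^-1)^-1 *: (Gt k - G k)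
              /\ comm (Wm k) (Wp 0%N) = (q + q^-1)^-1 *: (Gt k - G k)) /\
      (forall k, qcomm q (Wm 0%N) (G k) = rho q *: Wm k.+1 - rho q *: Wp k
              /\ qcomm q (Gt k) (Wm 0%N) = rho q *: Wm k.+1 - rho q *: Wp k) /\
      (forall k, qcomm q (G k) (Wp 0%N) = rho q *: Wp k.+1 - rho q *: Wm k
              /\ qcomm q (Wp 0%N) (Gt k) = rho q *: Wp k.+1 - rho q *: Wm k) /\
      (forall k l, comm (Wm k) (Wm l) = 0 /\ comm (Wp k) (Wp l) = 0) /\
      (forall k l, comm (Wm k) (Wp l) + comm (Wp k) (Wm l) = 0) /\
      (forall k l, comm (Wm k) (G l) + comm (G k) (Wm l) = 0
                /\ comm (Wm k) (Gt l) + comm (Gt k) (Wm l) = 0) /\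
      (forall k l, comm (Wp k) (G l) + comm (G k) (Wp l) = 0
                /\ comm (Wp k) (Gt l) + comm (Gt k) (Wp l) = 0) /\
      (forall k l, [/\ comm (G k) (G l) = 0, comm (Gt k) (Gt l) = 0 &
                       comm (Gt k) (G l) + comm (G k) (Gt l) = 0]).

(* Main.v *)
Require Import Defs.
From HB Require Import structures.
From mathcomp Require Import all_boot all_order all_algebra.
Import GRing.Theory.
Local Open Scope ring_scope.

Lemma sw (V : zmodType) (a b c d : V) : a - b - (c - d) = a - c - (b - d).
Proof. by rewrite !opprB -!addrA; congr (_ + _); rewrite [LHS]addrC -addrA addrCA. Qed.

Lemma key (F : fieldType) (V : lmodType F) (q : F) (a b s t : V) :
  q *: s - q^-1 *: t = q *: b - q^-1 *: a ->
  q *: (a - s) - q^-1 *: (b - t) = (q + q^-1) *: (a - b).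
Proof.
move=> h; rewrite !scalerBr sw h sw -!scalerBr -scalerN opprB -scalerDl.
by [].
Qed.

Lemma cne0 (F : fieldType) (q : F)
    (hq0 : q != 0) (hq : forall n : nat, (0 < n)%N -> q ^+ n != 1) :
  q + q^-1 != 0.
Proof.
apply/eqP => hc.
have h2 : q ^+ 2 = -1.
  have : q * (q + q^-1) = 0 by rewrite hc mulr0.
  rewrite mulrDr divff // expr2 => /eqP; rewrite addr_eq0 => /eqP //.
have := hq 4%N isT; rewrite (_ : 4%N = (2 * 2)%N) // exprM h2.
by rewrite expr2 mulrNN mulr1 eqxx.
Qed.

Theorem lemma4p8 (F : fieldType) (q : F)
    (hq0 : q != 0) (hq : forall n : nat, (0 < n)%N -> q ^+ n != 1)
    (A : algType F) (Wm Wp G Gt : nat -> A)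
    (hrel : Oq_relations q Wm Wp G Gt) :
  comm (Wm 0%N) (Gt 0%N) = comm (Wm 0%N) (qcomm q (Wm 0%N) (Wp 0%N)) /\
  comm (Gt 0%N) (Wp 0%N) = comm (qcomm q (Wm 0%N) (Wp 0%N)) (Wp 0%N).
Proof.
case: hrel => [h1 [h2 [h3 _]]].
have [e1 _] := h1 0%N.
have [e2a e2b] := h2 0%N.
have [e3a e3b] := h3 0%N.
have hc := @cne0 _ _ hq0 hq.
move: e1 e2a e2b e3a e3b.
rewrite /comm /qcomm.
set X := Wm 0%N; set Y := Wp 0%N; set g := G 0%N; set gt := Gt 0%N.
set c := q + q^-1.
move=> e1 e2a e2b e3a e3b.
have {}e1 : X * Y - Y * X = c^-1 *: (gt - g) := e1.
have cK : forall Z : A, c^-1 *: (c *: Z) = Z.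
  by move=> Z; rewrite scalerA mulVf // scale1r.
split.
- have -> : X * (q *: (X * Y) - q^-1 *: (Y * X)) - (q *: (X * Y) - q^-1 *: (Y * X)) * X
          = q *: (X * (X * Y - Y * X)) - q^-1 *: ((X * Y - Y * X) * X).
    by rewrite !mulrBr !mulrBl -!scalerAr -!scalerAl !mulrA !scalerBr sw.
  rewrite e1 -scalerAr -scalerAl !scalerA mulrC [q^-1 * _]mulrC -!scalerA -scalerBr.
  rewrite mulrBr mulrBl key ?cK //.
  by rewrite e2a -e2b.
- have -> : (q *: (X * Y) - q^-1 *: (Y * X)) * Y - Y * (q *: (X * Y) - q^-1 *: (Y * X))
          = q *: ((X * Y - Y * X) * Y) - q^-1 *: (Y * (X * Y - Y * X)).
    by rewrite !mulrBr !mulrBl -!scalerAr -!scalerAl !mulrA !scalerBr sw.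
  rewrite e1 -scalerAr -scalerAl !scalerA mulrC [q^-1 * _]mulrC -!scalerA -scalerBr.
  rewrite mulrBr mulrBl key ?cK //.
  by rewrite e3a -e3b.
Qed.
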